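(* Let $\sigma>0$, $r\in\mathbb{R}$, $A>0$ and $B>0$, and consider the system of ODEs \[ \dot{x}_d = X,\quad \dot{X}=\sigma\big(Y-X+A\sin(Bx_d)\big),\quad \dot{Y}=-XZ+rX-Y,\quad \dot{Z}=XY-Z . \] Let $k$ be an odd integer and consider the equilibrium $(x_d,X,Y,Z)=(k\pi/B,0,0,0)$. The eigenvalues of the Jacobian at this equilibrium are $-1$ together with the roots of the cubic $\lambda^3+(\sigma+1)\lambda^2+\sigma(1-r+AB)\lambda+AB\sigma$. Define \[ r_c = 1+AB\,\frac{\sigma}{\sigma+1}. \] Then: (i) if all roots of the cubic are real, they are all negative when $r<1+AB$, while when $r>1+AB$ two of them are positive; (ii) if the cubic has a pair of non-real complex conjugate roots, then its remaining real root is negative, and the complex conjugate pair has negative real part when $r<r_c$ and positive real part when $r>r_c$; (iii) at $r=r_c$ the cubic has a pair of purely imaginary roots $\pm i\omega$ with $\omega^2 = AB\,\sigma/(\sigma+1)$.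
   Context: The system models a one-dimensional wave-particle entity (a walking droplet) in the sinusoidal potential $U(x)=(A/B)\cos(Bx)$: $x_d$ is the particle position, $X$ its velocity, and $Y,Z$ are wave-memory variables. The equilibria with odd $k$ correspond to the particle sitting at the minima of the potential. *)

(* Defs.v *)
From mathcomp Require Import all_boot all_algebra.
From mathcomp Require Import all_classical all_reals all_analysis.
From mathcomp Require Export complex.
Export ComplexField.
Import GRing.Theory Num.Theory.
Local Open Scope ring_scope.

Definition wpe_field {R : realType} (sigma r A B : R) (u : 'rV[R]_4) : 'rV[R]_4 :=
  let xd := u ord0 (@inord 3 0) in
  let X  := u ord0 (@inord 3 1) in
  let Y  := u ord0 (@inord 3 2) in
  let Z  := u ord0 (@inord 3 3) in
  \row_(i < 4)
    [:: X;
        sigma * (Y - X + A * sin (B * xd));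
        - (X * Z) + r * X - Y;
        X * Y - Z]`_i.

Definition wpe_equil {R : realType} (B : R) (k : int) : 'rV[R]_4 :=
  \row_(i < 4) (if i == 0 :> nat then k%:~R * pi / B else 0).

Definition jacobian4 {R : realType} (f : 'rV[R]_4 -> 'rV[R]_4) (p : 'rV[R]_4)
  : 'M[R]_4 :=
  \matrix_(i < 4, j < 4)
     derive1 (fun t : R => f (p + t *: delta_mx 0 j) 0 i) 0.

Definition wpe_cubic {R : realType} (sigma r A B : R) : {poly R} :=
  'X^3 + (sigma + 1)%:P * 'X^2 + (sigma * (1 - r + A * B))%:P * 'X
  + (A * B * sigma)%:P.

Definition wpe_cubicC {R : realType} (sigma r A B : R) : {poly R[i]} :=
  map_poly (fun x : R => x%:C%C) (wpe_cubic sigma r A B).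

Definition wpe_rc {R : realType} (sigma A B : R) : R :=
  1 + A * B * (sigma / (sigma + 1)).

(* Main.v *)
Require Import Defs.
From mathcomp Require Import all_boot all_algebra.
From mathcomp Require Import all_classical all_reals all_analysis.
From mathcomp Require Import complex.
From mathcomp Require Import ring lra zify.
Import ComplexField.
Import order.Order.TTheory GRing.Theory Num.Theory.
Local Open Scope ring_scope.

Lemma coordE (R : realType) (B : R) (k : int) (j : 'I_4) (t : R) (n : nat) :
  (n < 4)%N ->
  (wpe_equil B k + t *: delta_mx 0 j) ord0 (@inord 3 n) =
  (if n == 0%N then k%:~R * pi / B else 0) + t * (j == n :> nat)%:R.
Proof.
move=> hn; rewrite !mxE eqxx /= -val_eqE /= inordK // .
congr (_ + _ * _%:R); by rewrite eq_sym.
Qed.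

Lemma jacE (R : realType) (sigma r A B : R) (k : int) (i j : 'I_4) :
  jacobian4 (wpe_field sigma r A B) (wpe_equil B k) i j =
  [:: (j == 1%N :> nat)%:R;
      sigma * ((j == 2%N :> nat)%:R - (j == 1%N :> nat)%:R
               + A * (B * cos (B * (k%:~R * pi / B))) * (j == 0%N :> nat)%:R);
      r * (j == 1%N :> nat)%:R - (j == 2%N :> nat)%:R;
      - (j == 3%N :> nat)%:R]`_i.
Proof.
rewrite mxE.
set d := fun n : nat => (j == n :> nat)%:R : R.
set c0 := k%:~R * pi / B.
have -> : (fun t : R => wpe_field sigma r A B (wpe_equil B k + t *: delta_mx 0 j) 0 i)
  = (fun t : R => [:: 0 + t * d 1%N;
       sigma * ((0 + t * d 2%N) - (0 + t * d 1%N) + A * sin (B * (c0 + t * d 0%N)));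
       - ((0 + t * d 1%N) * (0 + t * d 3%N)) + r * (0 + t * d 1%N) - (0 + t * d 2%N);
       (0 + t * d 1%N) * (0 + t * d 2%N) - (0 + t * d 3%N)]`_i).
  apply/funext => t.
  by rewrite /wpe_field mxE !coordE.
case: i => [[|[|[|[|?]]]] hi] /=; last by [].
all: rewrite derive1E derive_val.
all: rewrite /d /c0 ?(mul0r,add0r,addr0,mul1r,scaler0,scale0r).
all: rewrite /GRing.scale /= ?mulr1.
- by [].
- by ring.
- by rewrite oppr0 add0r.
- by [].
Qed.

Lemma det44f (R : comNzRingType) (f : nat -> nat -> R) :
  \det (\matrix_(i < 4, j < 4) f i j) =
  let d3 a b c x y z := f a x * (f b y * f c z - f b z * f c y)
         - f a y * (f b x * f c z - f b z * f c x)
         + f a z * (f b x * f c y - f b y * f c x) in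
  f 0%N 0%N * d3 1%N 2%N 3%N 1%N 2%N 3%N - f 0%N 1%N * d3 1%N 2%N 3%N 0%N 2%N 3%N + f 0%N 2%N * d3 1%N 2%N 3%N 0%N 1%N 3%N
  - f 0%N 3%N * d3 1%N 2%N 3%N 0%N 1%N 2%N.
Proof.
rewrite (expand_det_row _ 0) !big_ord_recl big_ord0 /cofactor.
rewrite !(expand_det_row _ 0) !big_ord_recl !big_ord0 /cofactor.
rewrite !(expand_det_row _ 0) !big_ord_recl !big_ord0 /cofactor.
rewrite !det_mx11 !mxE /=.
ring.
Qed.

Lemma charE (R : realType) (sigma r A B : R) :
  char_poly (\matrix_(i < 4, j < 4)
  [:: (j == 1%N :> nat)%:R;
      sigma * ((j == 2%N :> nat)%:R - (j == 1%N :> nat)%:R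
               + A * (B * -1) * (j == 0%N :> nat)%:R);
      r * (j == 1%N :> nat)%:R - (j == 2%N :> nat)%:R;
      - (j == 3%N :> nat)%:R]`_i) = ('X + 1) * wpe_cubic sigma r A B.
Proof.
rewrite /char_poly /char_poly_mx.
set g := fun a b : nat => [:: (b == 1%N)%:R;
      sigma * ((b == 2%N)%:R - (b == 1%N)%:R
               + A * (B * -1) * (b == 0%N)%:R);
      r * (b == 1%N)%:R - (b == 2%N)%:R;
      - (b == 3%N)%:R]`_a : R.
have -> : 'X%:M - map_mx polyC (\matrix_(i < 4, j < 4) g i j) =
   \matrix_(i < 4, j < 4) ('X *+ (i == j :> nat) - (g i j)%:P).
  by apply/matrixP => i j; rewrite !mxE.
rewrite (@det44f _ (fun a b : nat => 'X *+ (a == b) - (g a b)%:P)) /= /g /=.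
rewrite /wpe_cubic.
rewrite ?(polyCD, polyCM, polyCN, polyCB, polyC1, polyC0, mulr0n, mulr1n).

ring.
Qed.

Lemma cos_odd_nat (R : realType) (n : nat) : odd n -> cos (n%:R * pi) = -1 :> R.
Proof.
move=> hn; rewrite mulr_natl -[pi *+ n]add0r (alternatingn (@cosDpi R)) cos0 mulr1.
by rewrite -signr_odd hn expr1.
Qed.

Lemma cos_odd (R : realType) (k : int) (B : R) : B != 0 -> (k %% 2)%Z = 1 ->
  cos (B * (k%:~R * pi / B)) = -1.
Proof.
move=> hB hk; rewrite mulrC divfK //.
case: k hk => n hk.
  rewrite modz_nat in hk.
  have hn : odd n by move: hk => [] /eqP; rewrite modn2; case: (odd n).
  by rewrite -(@cos_odd_nat R n hn).
rewrite NegzE mulrNz mulNr cosN (cos_odd_nat R) //.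
move: hk; rewrite modNz_nat // => /eqP.
move=> h; have h2 : (n %% 2 = 0)%N by lia.
by move: h2; rewrite modn2 /=; case: (odd n).
Qed.

Lemma hornerCE (R : realType) (sigma r A B : R) (z : R[i]) :
  (wpe_cubicC sigma r A B).[z] =
  z ^+ 3 + (sigma + 1)%:C%C * z ^+ 2 + (sigma * (1 - r + A * B))%:C%C * z + (A * B * sigma)%:C%C.
Proof.
rewrite /wpe_cubicC -/(map_poly (real_complex R) _).
rewrite /wpe_cubic.
rewrite !rmorphD /= !rmorphM /= ?map_polyXn ?map_polyX ?map_polyC /= !hornerE.
rewrite ?rmorphD /= ?map_polyC /= ?hornerE.
ring.
Qed.

Lemma rootCE (R : realType) (a2 a1 a0 x y : R) :
  ((x +i* y)%C ^+ 3 + a2%:C%C * (x +i* y)%C ^+ 2 + a1%:C%C * (x +i* y)%C + a0%:C%C == 0)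
  = (x ^+ 3 - 3%:R * x * y ^+ 2 + a2 * (x ^+ 2 - y ^+ 2) + a1 * x + a0 == 0)
    && (y * (3%:R * x ^+ 2 - y ^+ 2 + 2%:R * a2 * x + a1) == 0).
Proof.
have -> : ((x +i* y)%C ^+ 3 + a2%:C%C * (x +i* y)%C ^+ 2 + a1%:C%C * (x +i* y)%C + a0%:C%C)
  = ((x ^+ 3 - 3%:R * x * y ^+ 2 + a2 * (x ^+ 2 - y ^+ 2) + a1 * x + a0) +i*
     (y * (3%:R * x ^+ 2 - y ^+ 2 + 2%:R * a2 * x + a1)))%C.
  rewrite !exprS expr0 /=.
  by simpc; congr (_ +i* _)%C; ring.
apply/idP/andP => [/eqP [-> ->]|[/eqP -> /eqP ->]] //.
Qed.

Lemma nonreal (R : realFieldType) (a2 a1 a0 x y : R) :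
  x^+3 - 3%:R*x*y^+2 + a2*(x^+2 - y^+2) + a1*x + a0 = 0 ->
  y * (3%:R*x^+2 - y^+2 + 2%:R*a2*x + a1) = 0 -> y != 0 ->
  (forall t, t^+3 + a2*t^+2 + a1*t + a0 = (t - (-a2 - 2%:R*x)) * ((t - x)^+2 + y^+2)) /\
  a2*a1 - a0 = -(2%:R*x) * ((-a2 - x)^+2 + y^+2).
Proof.
move=> hre him hy.
have hi : 3%:R*x^+2 - y^+2 + 2%:R*a2*x + a1 = 0.
  by move/eqP: him; rewrite mulf_eq0 (negbTE hy) /= => /eqP.
have ha1 : a1 = y^+2 - 3%:R*x^+2 - 2%:R*a2*x.
  by apply/eqP; rewrite -subr_eq0 -hi; apply/eqP; ring.
have ha0 : a0 = -(x^+3 - 3%:R*x*y^+2 + a2*(x^+2 - y^+2) + a1*x).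
  by apply/eqP; rewrite -subr_eq0 -hre; apply/eqP; ring.
rewrite ha0 ha1; split; last by ring.
by move=> t; ring.
Qed.

Lemma split_real (R : rcfType) (a2 a1 a0 c : R) :
  c^+3 + a2*c^+2 + a1*c + a0 = 0 ->
  0 <= (a2 + c)^+2 - 4%:R * (a1 + a2*c + c^+2) ->
  exists a b, a + b + c = -a2 /\ a*b + b*c + c*a = a1 /\ a*b*c = -a0.
Proof.
move=> hc hD.
set D := (a2 + c)^+2 - 4%:R * (a1 + a2*c + c^+2) in hD.
have hs : Num.sqrt D ^+ 2 = D by rewrite sqr_sqrtr.
set a := (-(a2 + c) - Num.sqrt D) / 2%:R.
set b := (-(a2 + c) + Num.sqrt D) / 2%:R.
exists a, b.
have ha0 : a0 = -(c^+3 + a2*c^+2 + a1*c).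
  by apply/eqP; rewrite -subr_eq0 -hc; apply/eqP; ring.
have hsum : a + b = -(a2 + c) by rewrite /a /b; field.
have hab : a * b = ((a2 + c)^+2 - D) / 4%:R.
  by rewrite -[X in _ = (_ - X) / _]hs /a /b; field.
split.
  by rewrite hsum; ring.

split.
  have -> : a*b+b*c+c*a = a*b + c*(a+b) by ring.
  by rewrite hab hsum /D; field.
by rewrite hab /D ha0; field.
Qed.

Lemma cplx_root (R : rcfType) (a2 a1 a0 c : R) :
  c^+3 + a2*c^+2 + a1*c + a0 = 0 ->
  (a2 + c)^+2 - 4%:R * (a1 + a2*c + c^+2) < 0 ->
  let x := - (a2 + c) / 2%:R in
  let y := Num.sqrt (- ((a2 + c)^+2 - 4%:R * (a1 + a2*c + c^+2))) / 2%:R in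
  [/\ x^+3 - 3%:R*x*y^+2 + a2*(x^+2 - y^+2) + a1*x + a0 = 0,
      y * (3%:R*x^+2 - y^+2 + 2%:R*a2*x + a1) = 0 & 0 < y].
Proof.
move=> hc hD x y.
have hy2 : y ^+ 2 = - ((a2 + c)^+2 - 4%:R * (a1 + a2*c + c^+2)) / 4%:R.
  rewrite /y expr_div_n sqr_sqrtr; last by rewrite oppr_ge0 ltW.
  by field.
have ha0 : a0 = -(c^+3 + a2*c^+2 + a1*c).
  by apply/eqP; rewrite -subr_eq0 -hc; apply/eqP; ring.
split.
- by rewrite hy2 ha0 /x; field.
- by rewrite hy2 /x; field.
- by rewrite /y divr_gt0 // sqrtr_gt0 oppr_gt0.
Qed.

Lemma count2 (R : realDomainType) (a b c a2 a1 a0 : R) :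
  0 < a2 -> a1 < 0 -> 0 < a0 -> a+b+c = -a2 -> a*b+b*c+c*a = a1 -> a*b*c = -a0 ->
  ((0 < a)%R + (0 < b)%R + (0 < c)%R)%N = 2%N.
Proof.
move=> h2 h1 h0 e2 e1 e0.
case: (ltrP 0 a) => ha; case: (ltrP 0 b) => hb; case: (ltrP 0 c) => hc //=; exfalso.
- have := mulr_gt0 (mulr_gt0 ha hb) hc; lra.
- have : 0 <= a * (b * c) by apply: mulr_ge0; [lra| nra]. 
  rewrite mulrA; lra.
- have : 0 <= b * (a * c) by apply: mulr_ge0; [lra| nra].
  nra.
- have : 0 <= c * (a * b) by apply: mulr_ge0; [lra| nra].
  nra.
- nra.
Qed.

Arguments nonreal {R a2 a1 a0 x y}.
Arguments split_real {R a2 a1 a0 c}.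
Arguments cplx_root {R a2 a1 a0 c}.
Arguments count2 {R a b c a2 a1 a0}.

Lemma rootCP (R : realType) (sigma r A B x y : R) :
 root (wpe_cubicC sigma r A B) (x +i* y)%C =
 (x^+3 - 3%:R*x*y^+2 + (sigma+1)*(x^+2 - y^+2) + (sigma*(1-r+A*B))*x + A*B*sigma == 0)
 && (y * (3%:R*x^+2 - y^+2 + 2%:R*(sigma+1)*x + sigma*(1-r+A*B)) == 0).
Proof. by rewrite rootE hornerCE rootCE. Qed.

Lemma rootRP (R : realType) (sigma r A B x : R) :
  root (wpe_cubic sigma r A B) x =
  (x^+3 + (sigma+1)*x^+2 + sigma*(1-r+A*B)*x + A*B*sigma == 0).
Proof. by rewrite rootE /wpe_cubic !hornerE. Qed.

Lemma size_cubicC (R : realType) (sigma r A B : R) : size (wpe_cubicC sigma r A B) != 1%N.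
Proof.
rewrite /wpe_cubicC -/(map_poly (real_complex R) _) size_map_poly.
apply/eqP => h.
have : (wpe_cubic sigma r A B)`_3 = 0 by rewrite nth_default // h.
rewrite /wpe_cubic !coefD !coefCM coefXn coefX coefC !coefXn /=.
by rewrite !mulr0 !addr0 => /eqP; rewrite oner_eq0.
Qed.


Lemma ImC0 (R : realType) (x y : R) : (Im (x +i* y)%C = 0) <-> y = 0.
Proof. by rewrite -complexIm /=; split => [[]|->]. Qed.

Lemma ImCn0 (R : realType) (x y : R) : (Im (x +i* y)%C != 0) -> y != 0.
Proof. by apply: contra => /eqP /ImC0 ->. Qed.

Lemma ReClt0 (R : realType) (x y : R) : (Re (x +i* y)%C < 0) = (x < 0).
Proof. by rewrite -complexRe /=; exact: (ltcR x 0). Qed.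

Lemma ReCgt0 (R : realType) (x y : R) : (0 < Re (x +i* y)%C) = (0 < x).
Proof. by rewrite -complexRe /=; exact: (ltcR 0 x). Qed.

Theorem mainTheorem2 (R : realType) (sigma r A B : R) (k : int)
  (hsigma : 0 < sigma) (hA : 0 < A) (hB : 0 < B) (hk : (k %% 2)%Z = 1) :
  char_poly (jacobian4 (wpe_field sigma r A B) (wpe_equil B k))
    = ('X + 1) * wpe_cubic sigma r A B
  /\ ((forall z : R[i], root (wpe_cubicC sigma r A B) z -> Im z = 0) ->
        (r < 1 + A * B ->
           forall z : R[i], root (wpe_cubicC sigma r A B) z -> Re z < 0)
     /\ (1 + A * B < r ->
           exists a b c : R,
             wpe_cubic sigma r A B = ('X - a%:P) * ('X - b%:P) * ('X - c%:P)
             /\ ((0 < a)%R + (0 < b)%R + (0 < c)%R)%N = 2%N))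
  /\ ((exists z : R[i], root (wpe_cubicC sigma r A B) z /\ Im z != 0) ->
        (forall x : R, root (wpe_cubic sigma r A B) x -> x < 0)
     /\ (forall z : R[i], root (wpe_cubicC sigma r A B) z -> Im z != 0 ->
           (r < wpe_rc sigma A B -> Re z < 0)
           /\ (wpe_rc sigma A B < r -> 0 < Re z)))
  /\ (r = wpe_rc sigma A B ->
        exists omega : R, 0 < omega
          /\ omega ^+ 2 = A * B * sigma / (sigma + 1)
          /\ root (wpe_cubicC sigma r A B) (omega%:C * 'i)%C
          /\ root (wpe_cubicC sigma r A B) (- (omega%:C * 'i))%C).
Proof.
have hB0 : B != 0 by rewrite gt_eqF.
have hs1 : sigma + 1 != 0 by rewrite gt_eqF //; lra.
have ha0 : 0 < A * B * sigma by rewrite !mulr_gt0.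
split.
  have -> : jacobian4 (wpe_field sigma r A B) (wpe_equil B k) =
    \matrix_(i < 4, j < 4)
  [:: (j == 1%N :> nat)%:R;
      sigma * ((j == 2%N :> nat)%:R - (j == 1%N :> nat)%:R
               + A * (B * -1) * (j == 0%N :> nat)%:R);
      r * (j == 1%N :> nat)%:R - (j == 2%N :> nat)%:R;
      - (j == 3%N :> nat)%:R]`_i.
    by apply/matrixP => i j; rewrite jacE cos_odd // mxE.
  exact: charE.
split.
  move=> Hreal; split.
    move=> hr [x y] hz.
    have /ImC0 y0 := Hreal _ hz; subst y.
    move: hz; rewrite rootCP ReClt0 => /andP [/eqP h _].
    have h' : x^+3 + (sigma+1)*x^+2 + sigma*(1-r+A*B)*x + A*B*sigma = 0 by rewrite -h; ring.
    rewrite ltNge; apply/negP => hx.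
    have p1 : 0 <= x^+3 by rewrite exprn_ge0.
    have p2 : 0 <= (sigma+1)*x^+2 by rewrite mulr_ge0 ?sqr_ge0 //; lra.
    have p3 : 0 <= sigma*(1-r+A*B)*x by rewrite !mulr_ge0 //; lra.
    lra.
  move=> hr.
  have /closed_rootP [[c y] hz] := size_cubicC _ sigma r A B.
  have /ImC0 y0 := Hreal _ hz; subst y.
  move: (hz); rewrite rootCP => /andP [/eqP h _].
  have hc : c^+3 + (sigma+1)*c^+2 + sigma*(1-r+A*B)*c + A*B*sigma = 0 by rewrite -h; ring.
  case: (ltrP ((sigma + 1 + c)^+2 - 4%:R * (sigma*(1-r+A*B) + (sigma+1)*c + c^+2)) 0) => hD.
    have [hre him hy] := cplx_root hc hD.
    set x := - (sigma + 1 + c) / 2%:R in hre him.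
    set y := Num.sqrt _ / 2%:R in hre him hy.
    have : root (wpe_cubicC sigma r A B) (x +i* y)%C.
      by rewrite rootCP hre him eqxx.
    move/Hreal/ImC0 => y0; lra.
  have [a [b [e2 [e1 e0]]]] := split_real hc hD.
  exists a, b, c; split.
    rewrite /wpe_cubic -[sigma + 1]opprK -e2 -e1 -[A * B * sigma]opprK -e0.
    rewrite !(polyCN, polyCD, polyCM); ring.
  apply: (count2 _ _ _ e2 e1 e0) => //; first lra.
  nra.
split.
  move=> [[x y] [hz /ImCn0 hy]].
  move: hz; rewrite rootCP => /andP [/eqP hre /eqP him].
  have [hfac _] := nonreal hre him hy.
  have hy2 : 0 < y ^+ 2 by rewrite exprn_even_gt0.
  have hK : forall t, 0 < (t - x)^+2 + y^+2.
    by move=> t; have := sqr_ge0 (t - x); lra.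
  have hc : - (sigma + 1) - 2%:R * x < 0.
    have e : A*B*sigma = (0 - (- (sigma + 1) - 2%:R * x)) * ((0 - x)^+2 + y^+2).
      by rewrite -hfac; ring.
    have := hK 0; nra.
  split.
  move=> t; rewrite rootRP => /eqP ht.
  move: (hfac t); rewrite ht => /esym /eqP; rewrite mulf_eq0 => /orP [|].
    by rewrite subr_eq0 => /eqP ->.
  by rewrite gt_eqF.
  move=> [u v] hz2 /ImCn0 hv.
  rewrite ReClt0 ReCgt0.
  move: hz2; rewrite rootCP => /andP [/eqP hre2 /eqP him2].
  have [_ hrh] := nonreal hre2 him2 hv.
  have hv2 : 0 < v ^+ 2 by rewrite exprn_even_gt0.
  have hK2 : 0 < (- (sigma + 1) - u)^+2 + v^+2.
    by have := sqr_ge0 (- (sigma + 1) - u); lra.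
  have hW : (sigma + 1) * (sigma * (1 - r + A * B)) - A * B * sigma
          = sigma * ((sigma + 1) * (wpe_rc sigma A B - r)).
    by rewrite /wpe_rc; field.
  rewrite hW in hrh.
  split => hr.
    have P : 0 < sigma * ((sigma + 1) * (wpe_rc sigma A B - r)).
      by rewrite !mulr_gt0 //; lra.
    rewrite hrh in P; nra.
  have P : sigma * ((sigma + 1) * (wpe_rc sigma A B - r)) < 0.
    by rewrite pmulr_rlt0 // pmulr_rlt0; lra.
  rewrite hrh in P; nra.
move=> hr.
have hq : 0 < A * B * sigma / (sigma + 1) by rewrite divr_gt0 //; lra.
exists (Num.sqrt (A * B * sigma / (sigma + 1))).
set w := Num.sqrt _.
have hw2 : w ^+ 2 = A * B * sigma / (sigma + 1) by rewrite sqr_sqrtr // ltW.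
split; first by rewrite sqrtr_gt0.
split; first exact: hw2.
have -> : (w%:C * 'i)%C = (0 +i* w)%C by simpc.
have -> : (- (0 +i* w))%C = (0 +i* (- w))%C by simpc.
rewrite !rootCP sqrrN hw2 hr /wpe_rc.
split; apply/andP; split; apply/eqP; field.
all: rewrite ?hs1 //.
Qed.
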